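(* Let $A\in\mathbb{R}^{n\times n}$, $B\in\mathbb{R}^{n\times m}$, $C\in\mathbb{R}^{p\times n}$, $D\in\mathbb{R}^{p\times p}$ with $(A,B)$ reachable, $(C,A)$ observable, $BB^T\succ0$, $DD^T\succ0$. Fix $c>0$, and let $r^R_c$, $r$ and the sequence $(\overline{P}_t)_{t\ge0}$ be as in the context. Let $\tilde P_0\in\mathcal{P}$ with $\tilde P_0\succeq BB^T$ and define $\tilde P_{t+1}=r^R_c(\tilde P_t)$ for $t\ge0$. Then for every integer $q\ge 0$, $$\tilde P_t\succeq \overline{P}_q\qquad\text{for all } t\ge q.$$
   Context: $\mathcal{P}$ denotes the cone of $n\times n$ real symmetric positive definite matrices; $\succeq$ is the Loewner order; $\lambda_1(P)$ is the largest eigenvalue of $P$. For $P\in\mathcal{P}$ and $\theta$ with $I-\theta P\succ0$, let $\gamma(\theta,P)=\tfrac12\big[\log\det(I-\theta P)+\mathrm{tr}((I-\theta P)^{-1})-n\big]$. For $c>0$ and $P\in\mathcal{P}$, $\theta_c(P)$ denotes the unique $\theta\in(0,\lambda_1(P)^{-1})$ with $\gamma(\theta,P)=c$ (its existence and uniqueness are taken as given). Define $r^R_c(P)=A[P^{-1}+C^T(DD^T)^{-1}C-\theta_c(P)I_n]^{-1}A^T+BB^T$ and the Riccati map $r(P)=A[P^{-1}+C^T(DD^T)^{-1}C]^{-1}A^T+BB^T$. Let $\overline{P}_0=BB^T$ and $\overline{P}_{t+1}=r(\overline{P}_t)$ for $t\ge0$. *)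

(* Defs.v *)
From HB Require Import structures.
From mathcomp Require Import all_boot all_order all_algebra.
From mathcomp Require Import all_classical all_reals all_analysis.
Set Implicit Arguments. Unset Strict Implicit. Unset Printing Implicit Defensive.
Import Order.TTheory GRing.Theory Num.Theory.
Local Open Scope ring_scope.

Section Defs.
Variable R : realType.

Definition qform n (M : 'M[R]_n) (x : 'cV[R]_n) : R := (x^T *m M *m x) 0 0.

Definition posdef n (M : 'M[R]_n) : Prop :=
  M^T = M /\ forall x : 'cV[R]_n, x != 0 -> 0 < qform M x.

Definition loewner_ge n (P Q : 'M[R]_n) : Prop :=
  (P - Q)^T = (P - Q) /\ forall x : 'cV[R]_n, 0 <= qform (P - Q) x.

Definition reachable n m (A : 'M[R]_n) (B : 'M[R]_(n, m)) : Prop :=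
  \rank (\mxrow_(k < n) (A ^+ k *m B)) = n.

Definition observable p n (C : 'M[R]_(p, n)) (A : 'M[R]_n) : Prop :=
  \rank (\mxcol_(k < n) (C *m A ^+ k)) = n.

Definition gamma n (theta : R) (P : 'M[R]_n) : R :=
  2^-1 * (ln (\det (1%:M - theta *: P)) + \tr (invmx (1%:M - theta *: P)) - n%:R).

(* theta is "the" theta_c(P): theta in (0, lambda_1(P)^{-1}) with gamma = c.
   For P positive definite and theta > 0, theta < lambda_1(P)^{-1} iff I - theta P > 0. *)
Definition thetac_spec n (c : R) (P : 'M[R]_n) (theta : R) : Prop :=
  0 < theta /\ posdef (1%:M - theta *: P) /\ gamma theta P = c.

Definition rR n p (A : 'M[R]_n) (BBt : 'M[R]_n) (C : 'M[R]_(p, n)) (D : 'M[R]_p)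
  (thetac : 'M[R]_n -> R) (P : 'M[R]_n) : 'M[R]_n :=
  A *m invmx (invmx P + C^T *m invmx (D *m D^T) *m C - thetac P *: 1%:M) *m A^T + BBt.

Definition ric n p (A : 'M[R]_n) (BBt : 'M[R]_n) (C : 'M[R]_(p, n)) (D : 'M[R]_p)
  (P : 'M[R]_n) : 'M[R]_n :=
  A *m invmx (invmx P + C^T *m invmx (D *m D^T) *m C) *m A^T + BBt.

End Defs.

(* Main.v *)
Require Import Defs.
From HB Require Import structures.
From mathcomp Require Import all_boot all_order all_algebra.
From mathcomp Require Import all_classical all_reals all_analysis.
From mathcomp Require Import lra.
Import Order.TTheory GRing.Theory Num.Theory.
Local Open Scope ring_scope.

Section Aux.
Variable R : realType.
Variable n : nat.
Implicit Types (M N P Q : 'M[R]_n) (x y : 'cV[R]_n).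

Definition dot x y : R := (x^T *m y) 0 0.

Lemma qformD M N x : qform (M + N) x = qform M x + qform N x.
Proof. by rewrite /qform mulmxDr mulmxDl mxE. Qed.
Lemma qformN M x : qform (- M) x = - qform M x.
Proof. by rewrite /qform mulmxN mulNmx mxE. Qed.
Lemma qformB M N x : qform (M - N) x = qform M x - qform N x.
Proof. by rewrite qformD qformN. Qed.
Lemma qformZ (a : R) M x : qform (a *: M) x = a * qform M x.
Proof. by rewrite /qform -scalemxAr -scalemxAl mxE. Qed.
Lemma qform1 x : qform 1%:M x = dot x x.
Proof. by rewrite /qform /dot mulmx1. Qed.
Lemma dot_ge0 x : 0 <= dot x x.
Proof.
rewrite /dot mxE; apply: sumr_ge0 => i _; rewrite mxE -expr2; exact: sqr_ge0.
Qed.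
Lemma qform_cong k (A : 'M[R]_(n,k)) (M : 'M[R]_k) x :
  qform (A *m M *m A^T) x = qform M (A^T *m x).
Proof. by rewrite /qform trmx_mul trmxK !mulmxA. Qed.
Lemma qform0 M : qform M 0 = 0.
Proof. by rewrite /qform mulmx0 mxE. Qed.
Lemma dotC x y : dot x y = dot y x.
Proof. by rewrite /dot -[y^T *m x]trmxK trmx_mul trmxK [in RHS]mxE. Qed.

Lemma posdef_psd M : posdef M -> forall x, 0 <= qform M x.
Proof.
move=> [_ H] x; case: (eqVneq x 0) => [->|/H/ltW //]; by rewrite qform0.
Qed.

Lemma posdef_unit M : posdef M -> M \in unitmx.
Proof.
move=> [Hs H]; rewrite unitmxE unitfE; apply/negP => /det0P [v v0 vM].
have Mv : M *m v^T = 0 by rewrite -Hs -trmx_mul vM trmx0.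
have := H v^T; rewrite trmx_eq0 v0 => /(_ isT).
by rewrite /qform -mulmxA Mv mulmx0 mxE ltxx.
Qed.

Lemma posdef_sym M : posdef M -> M^T = M. Proof. by case. Qed.

Lemma variational M x y : posdef M ->
  2 * dot x y - qform M y <= qform (invmx M) x.
Proof.
move=> PM; have Hs := posdef_sym _ PM; have Mu := posdef_unit _ PM.
set Mi := invmx M.
have h1 (u : 'rV[R]_n) : u *m M *m Mi = u by rewrite -mulmxA mulmxV // mulmx1.
have h2 (u : 'rV[R]_n) : u *m Mi *m M = u by rewrite -mulmxA mulVmx // mulmx1.
have E : (y - Mi *m x)^T *m M *m (y - Mi *m x) =
   y^T *m M *m y - x^T *m y - y^T *m x + x^T *m Mi *m x.
  rewrite [(_ - _)^T]linearB /= trmx_mul trmx_inv Hs -/Mi.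
  rewrite !mulmxBl !mulmxBr !mulmxA !h1 h2.
  by rewrite opprB !addrA [LHS]addrAC (addrAC (y^T *m M *m y)).
have := posdef_psd _ PM (y - Mi *m x).
have F (a b : 'M[R]_1) : (a + b) 0 0 = a 0 0 + b 0 0 by rewrite mxE.
have G (a : 'M[R]_1) : (- a) 0 0 = - a 0 0 by rewrite mxE.
rewrite /qform E !F !G -/(dot y x) -/(dot x y) (dotC y x).
lra.
Qed.

Lemma entryD (a b : 'M[R]_1) : (a + b) 0 0 = a 0 0 + b 0 0. Proof. by rewrite mxE. Qed.
Lemma entryN (a : 'M[R]_1) : (- a) 0 0 = - a 0 0. Proof. by rewrite mxE. Qed.
Lemma entryZ k (a : 'M[R]_1) : (k *: a) 0 0 = k * a 0 0. Proof. by rewrite mxE. Qed.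

Lemma qform_inv M x : posdef M -> qform (invmx M) x = qform M (invmx M *m x).
Proof.
move=> PM; have Hs := posdef_sym _ PM; have Mu := posdef_unit _ PM.
rewrite /qform trmx_mul trmx_inv Hs !mulmxA -[x^T *m invmx M *m M]mulmxA.
by rewrite mulVmx // mulmx1.
Qed.

Lemma posdef_inv M : posdef M -> posdef (invmx M).
Proof.
move=> PM; have Hs := posdef_sym _ PM; have Mu := posdef_unit _ PM.
split; first by rewrite trmx_inv Hs.
move=> x x0; rewrite qform_inv //; case: PM => _ H; apply: H.
apply: contraNneq x0 => e; by rewrite -(mulKVmx Mu x) e mulmx0.
Qed.

Lemma antitone P Q : posdef P -> posdef Q -> loewner_ge P Q ->
  loewner_ge (invmx Q) (invmx P).
Proof.
move=> PP PQ [_ HPQ].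
split; first by rewrite [(_ - _)^T]linearB /= !trmx_inv (posdef_sym _ PP) (posdef_sym _ PQ).
move=> x; rewrite qformB subr_ge0.
set y := invmx P *m x.
have e1 : qform (invmx P) x = dot x y by rewrite /qform /dot /y mulmxA.
have e2 : qform P y = qform (invmx P) x by rewrite qform_inv.
have := HPQ y; rewrite qformB subr_ge0 => h.
have := variational Q x y PQ.
lra.
Qed.

Lemma loewner_addr P Q S : loewner_ge P Q -> loewner_ge (P + S) (Q + S).
Proof. by rewrite /loewner_ge opprD addrACA subrr addr0. Qed.

Lemma cong_psd k (A : 'M[R]_(n,k)) (X : 'M[R]_k) :
  X^T = X -> (forall z : 'cV[R]_k, 0 <= qform X z) ->
  (A *m X *m A^T)^T = A *m X *m A^T /\ forall x, 0 <= qform (A *m X *m A^T) x.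
Proof.
move=> Hs H; split; first by rewrite !trmx_mul trmxK Hs mulmxA.
by move=> x; rewrite qform_cong.
Qed.

Lemma loewner_cong (A : 'M[R]_n) X Y Bb : loewner_ge X Y ->
  loewner_ge (A *m X *m A^T + Bb) (A *m Y *m A^T + Bb).
Proof.
move=> [Hs H]; rewrite /loewner_ge opprD addrACA subrr addr0 -mulmxBl -mulmxBr.
exact: cong_psd.
Qed.

Lemma posdef_add_psd P S : posdef P -> S^T = S -> (forall x, 0 <= qform S x) ->
  posdef (P + S).
Proof.
move=> [Hs H] HsS HS; split; first by rewrite [(_ + _)^T]linearD /= Hs HsS.
move=> x x0; rewrite qformD; have := H x x0; have := HS x; lra.
Qed.

Lemma posdef_cong (A : 'M[R]_n) X Bb : X^T = X -> (forall x, 0 <= qform X x) ->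
  posdef Bb -> posdef (A *m X *m A^T + Bb).
Proof.
move=> Hs H PB; have [h1 h2] := @cong_psd n A X Hs H.
rewrite addrC; apply: posdef_add_psd => //.
Qed.


End Aux.
Arguments dot {R n}.
Arguments qformD {R n}.
Arguments qformN {R n}.
Arguments qformB {R n}.
Arguments qformZ {R n}.
Arguments qform1 {R n}.
Arguments dot_ge0 {R n}.
Arguments qform_cong {R n}.
Arguments qform0 {R n}.
Arguments dotC {R n}.
Arguments posdef_psd {R n}.
Arguments posdef_unit {R n}.
Arguments posdef_sym {R n}.
Arguments variational {R n}.
Arguments entryD {R}.
Arguments entryN {R}.
Arguments entryZ {R}.
Arguments qform_inv {R n}.
Arguments posdef_inv {R n}.
Arguments antitone {R n}.
Arguments loewner_addr {R n}.
Arguments cong_psd {R n}.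
Arguments loewner_cong {R n}.
Arguments posdef_add_psd {R n}.
Arguments posdef_cong {R n}.

Section Aux2.
Variable R : realType.
Variable n : nat.
Implicit Types (M N P Q : 'M[R]_n) (x y : 'cV[R]_n).

Lemma dotZ (a : R) x : dot x (a *: x) = a * dot x x.
Proof. by rewrite /dot -scalemxAr entryZ. Qed.

Lemma qformZv (a : R) M x : qform M (a *: x) = a * a * qform M x.
Proof.
rewrite /qform linearZ /= [(_ *: x)^T]linearZ /= -scalemxAl -scalemxAl scalerA entryZ.
by rewrite mulrC.
Qed.

Lemma Mtheta_posdef (c : R) P S th : posdef P -> S^T = S ->
  (forall x, 0 <= qform S x) -> thetac_spec c P th ->
  posdef (invmx P + S - th *: 1%:M).
Proof.
move=> PP HsS HS [th0 [[_ Hi] _]].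
split.
  rewrite [(_ - _)^T]linearB /= linearD /= trmx_inv (posdef_sym _ PP) HsS.
  by rewrite linearZ /= trmx1.
move=> x x0; rewrite qformB qformD qformZ qform1.
have := Hi x x0; rewrite qformB qformZ qform1 => h1.
have := variational P x (th *: x) PP; rewrite dotZ qformZv => h2.
have := HS x => h3.
have h4 := mulr_gt0 th0 h1.
nra.
Qed.

End Aux2.
Arguments dotZ {R n}.
Arguments qformZv {R n}.
Arguments Mtheta_posdef {R n}.

Section Aux3.
Variable R : realType.
Variable n : nat.

Lemma rR_posdef p (A : 'M[R]_n) BBt (C : 'M[R]_(p, n)) (D : 'M[R]_p) c thetac P :
  posdef BBt -> posdef (D *m D^T) -> posdef P -> thetac_spec c P (thetac P) ->
  posdef (rR A BBt C D thetac P) /\ loewner_ge (rR A BBt C D thetac P) (ric A BBt C D P)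
  /\ loewner_ge (rR A BBt C D thetac P) BBt.
Proof.
move=> PB PD PP Hth.
set S := C^T *m invmx (D *m D^T) *m C.
have PDi := posdef_inv _ PD.
have [HsS HS] : S^T = S /\ forall x, 0 <= qform S x.
  have := @cong_psd _ _ p C^T (invmx (D *m D^T)) (posdef_sym _ PDi) (posdef_psd _ PDi).
  by rewrite trmxK.
have PM := Mtheta_posdef _ _ _ _ PP HsS HS Hth.
have PMi := posdef_inv _ PM.
have PM0 : posdef (invmx P + S) := posdef_add_psd _ _ (posdef_inv _ PP) HsS HS.
rewrite /rR /ric -/S.
split; first exact: posdef_cong _ _ _ (posdef_sym _ PMi) (posdef_psd _ PMi) PB.
split.
  apply: loewner_cong; apply: antitone => //.
  case: Hth => th0 _.
  rewrite /loewner_ge opprB addrC subrK; split; first by rewrite linearZ /= trmx1.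
  by move=> x; rewrite qformZ qform1; apply: mulr_ge0; [exact: ltW | exact: dot_ge0].
have [h1 h2] := @cong_psd _ _ n A _ (posdef_sym _ PMi) (posdef_psd _ PMi).
by rewrite /loewner_ge -addrA subrr addr0.
Qed.

Lemma ric_mono p (A : 'M[R]_n) BBt (C : 'M[R]_(p, n)) (D : 'M[R]_p) P Q :
  posdef BBt -> posdef (D *m D^T) -> posdef P -> posdef Q -> loewner_ge P Q ->
  posdef (ric A BBt C D Q) /\ loewner_ge (ric A BBt C D P) (ric A BBt C D Q).
Proof.
move=> PB PD PP PQ HPQ.
set S := C^T *m invmx (D *m D^T) *m C.
have PDi := posdef_inv _ PD.
have [HsS HS] : S^T = S /\ forall x, 0 <= qform S x.
  have := @cong_psd _ _ p C^T (invmx (D *m D^T)) (posdef_sym _ PDi) (posdef_psd _ PDi).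
  by rewrite trmxK.
have PMP : posdef (invmx P + S) := posdef_add_psd _ _ (posdef_inv _ PP) HsS HS.
have PMQ : posdef (invmx Q + S) := posdef_add_psd _ _ (posdef_inv _ PQ) HsS HS.
have PMQi := posdef_inv _ PMQ.
rewrite /ric -/S; split.
  exact: posdef_cong _ _ _ (posdef_sym _ PMQi) (posdef_psd _ PMQi) PB.
apply: loewner_cong; apply: antitone => //.
apply: loewner_addr; exact: antitone.
Qed.

End Aux3.

Lemma loewner_trans (R : realType) n (P Q S : 'M[R]_n) :
  loewner_ge P Q -> loewner_ge Q S -> loewner_ge P S.
Proof.
move=> [h1 h2] [h3 h4].
have E : P - S = (P - Q) + (Q - S) by rewrite addrA subrK.
split; first by rewrite E linearD /= h1 h3.
by move=> x; rewrite E qformD addr_ge0.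
Qed.

Lemma loewner_refl (R : realType) n (P : 'M[R]_n) : loewner_ge P P.
Proof. by rewrite /loewner_ge subrr trmx0; split=> // x; rewrite /qform mulmx0 mul0mx mxE. Qed.

Theorem lemma4 (R : realType) (n m p : nat)
  (A : 'M[R]_n) (B : 'M[R]_(n, m)) (C : 'M[R]_(p, n)) (D : 'M[R]_p)
  (c : R) (thetac : 'M[R]_n -> R) (P0 : 'M[R]_n) :
  reachable A B -> observable C A ->
  posdef (B *m B^T) -> posdef (D *m D^T) -> 0 < c ->
  (forall P : 'M[R]_n, posdef P -> thetac_spec c P (thetac P)) ->
  (forall (P : 'M[R]_n) (th : R), posdef P -> thetac_spec c P th -> th = thetac P) ->
  posdef P0 -> loewner_ge P0 (B *m B^T) ->
  forall q t : nat, (q <= t)%N ->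
    loewner_ge (iter t (rR A (B *m B^T) C D thetac) P0)
               (iter q (ric A (B *m B^T) C D) (B *m B^T)).
Proof.
move=> _ _ PB PD _ Hspec _ PP0 H0.
set f := rR A (B *m B^T) C D thetac.
set g := ric A (B *m B^T) C D.
have Ptil : forall t, posdef (iter t f P0).
  elim=> [|t IH] //=; have [h _] := @rR_posdef R n p A _ C D c thetac _ PB PD IH (Hspec _ IH); exact: h.
have Pbar : forall q, posdef (iter q g (B *m B^T)).
  elim=> [|q IH] //=; have [h _] := @ric_mono R n p A _ C D _ _ PB PD IH IH (loewner_refl _ _ _); exact: h.
elim=> [|q IH] t.
  case: t => [|t] _ //=.
  by have [_ [_ h]] := @rR_posdef R n p A _ C D c thetac _ PB PD (Ptil t) (Hspec _ (Ptil t)).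
case: t => [|t] //= Hqt.
have [_ [h1 _]] := @rR_posdef R n p A _ C D c thetac _ PB PD (Ptil t) (Hspec _ (Ptil t)).
apply: loewner_trans h1 _.
have [_ h2] := @ric_mono R n p A _ C D _ _ PB PD (Ptil t) (Pbar q) (IH t Hqt).
exact: h2.
Qed.
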